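(* For every compact set $V\subset\mathcal{A}_0$, $$\mathrm{bor}(V^* )=V^*\setminus(\mathrm{cm}(V))^T.$$
   Context: $D=\{z:|z|<1\}$, $\overline D$ its closure. $\mathcal{A}$ is the space of functions $f(z)=\sum_{k\ge0}a_k(f)z^k$ analytic in $D$, with the topology of locally uniform convergence; $\mathcal{A}_0=\{f\in\mathcal{A}: a_0(f)=1\}$. $\mathcal{A}(\overline D)$ is the set of functions analytic in some disk $\{|z|<R\}$ with $R>1$, and $\mathcal{A}_0(\overline D)=\{g\in\mathcal{A}(\overline D):a_0(g)=1\}$. The Hadamard product is $(f*g)(z)=\sum_{k\ge0}a_k(f)a_k(g)z^k$. For $V\subset\mathcal{A}_0$, $V^*=\{g\in\mathcal{A}_0:(f*g)(z)\ne0 \ \forall z\in D,\ \forall f\in V\}$ and $V^T=\{g\in\mathcal{A}_0(\overline D): (f*g)(1)\ne0 \ \forall f\in V\}$. For $x\in\overline D$, $(P_xf)(z)=f(xz)$, and $\mathrm{cm}(V)=\{P_xf:f\in V,\ x\in\overline D\}$. Let $e\equiv1$. For $W\subset\mathcal{A}_0$ with $W\ne\{e\}$, $f\in W$ is a border element of $W$ if whenever $f=P_xg$ with $g\in W$, $x\in\overline D$, then $|x|=1$; $\mathrm{bor}(W)$ is the set of border elements; if $W=\{e\}$, $\mathrm{bor}(W)=\{e\}$. *)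

(* Defs.v *)
From Stdlib Require Import Reals List.
From Coquelicot Require Import Coquelicot.
Open Scope R_scope.

(* A function analytic in D is represented by its Taylor coefficient sequence
   a : nat -> C, with f(z) = sum_k a_k z^k. *)
Definition coef := nat -> C.

Definition CSeries (u : nat -> C) : C :=
  (Series (fun k => fst (u k)), Series (fun k => snd (u k))).

Definition evalA (a : coef) (z : C) : C := CSeries (fun k => Cmult (a k) (pow_n z k)).

Definition inA (a : coef) : Prop :=
  forall z : C, Cmod z < 1 -> ex_series (fun k => Cmult (a k) (pow_n z k)).

Definition inA0 (a : coef) : Prop := inA a /\ a 0%nat = RtoC 1.

(* A(closed D): analytic in some disc |z| < R with R > 1 *)
Definition inAbar (a : coef) : Prop :=
  exists R : R, 1 < R /\
    forall z : C, Cmod z < R -> ex_series (fun k => Cmult (a k) (pow_n z k)).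

Definition inAbar0 (a : coef) : Prop := inAbar a /\ a 0%nat = RtoC 1.

Definition hadamard (f g : coef) : coef := fun k => Cmult (f k) (g k).

Definition e_fun : coef := fun k => match k with O => RtoC 1 | _ => RtoC 0 end.

(* P_x f (z) = f (x z) *)
Definition Px (x : C) (f : coef) : coef := fun k => Cmult (f k) (pow_n x k).

Definition dual_star (V : coef -> Prop) : coef -> Prop :=
  fun g => inA0 g /\
    forall f, V f -> forall z : C, Cmod z < 1 -> evalA (hadamard f g) z <> RtoC 0.

Definition dual_T (V : coef -> Prop) : coef -> Prop :=
  fun g => inAbar0 g /\ forall f, V f -> evalA (hadamard f g) (RtoC 1) <> RtoC 0.

Definition cm (V : coef -> Prop) : coef -> Prop :=
  fun h => exists f x, V f /\ Cmod x <= 1 /\ h = Px x f.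

Definition is_border (W : coef -> Prop) (f : coef) : Prop :=
  W f /\ forall g x, W g -> Cmod x <= 1 -> f = Px x g -> Cmod x = 1.

Definition bor (W : coef -> Prop) : coef -> Prop :=
  fun f => ((forall h, W h <-> h = e_fun) /\ f = e_fun)
        \/ (~ (forall h, W h <-> h = e_fun) /\ is_border W f).

(* Topology of locally uniform convergence on D (on the space A).
   Basic neighbourhoods: {g in A : |g(z) - f(z)| < eps for all |z| <= r}, r < 1. *)
Definition openA (U : coef -> Prop) : Prop :=
  forall f, U f -> inA f /\
    exists r eps : R, 0 <= r < 1 /\ 0 < eps /\
      forall g, inA g ->
        (forall z : C, Cmod z <= r -> Cmod (Cminus (evalA g z) (evalA f z)) < eps) ->
        U g.

Definition compactA (K : coef -> Prop) : Prop :=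
  (forall f, K f -> inA f) /\
  forall (I : Type) (U : I -> coef -> Prop),
    (forall i, openA (U i)) ->
    (forall f, K f -> exists i, U i f) ->
    exists l : list I, forall f, K f -> exists i, In i l /\ U i f.

(* Main.v *)
Require Import Defs.
From Stdlib Require Import Reals List Lra Lia Classical FunctionalExtensionality.
From Coquelicot Require Import Coquelicot.
Open Scope R_scope.

Definition Cis (u : nat -> C) (l : C) := @is_series C_AbsRing C_NormedModule u l.

Lemma sum_n_fst (u : nat -> C) n :
  fst (sum_n u n) = sum_n (fun k => fst (u k)) n.
Proof.
  induction n as [|n IH].
  - rewrite !sum_O. reflexivity.
  - rewrite !sum_Sn. simpl. rewrite <- IH. reflexivity.
Qed.

Lemma sum_n_snd (u : nat -> C) n :
  snd (sum_n u n) = sum_n (fun k => snd (u k)) n.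
Proof.
  induction n as [|n IH].
  - rewrite !sum_O. reflexivity.
  - rewrite !sum_Sn. simpl. rewrite <- IH. reflexivity.
Qed.

Lemma Cis_CSeries u l : Cis u l -> CSeries u = l.
Proof.
  intros H. unfold CSeries.
  assert (H1 : is_series (fun k => fst (u k)) (fst l)).
  { unfold is_series. apply (filterlim_locally_ball_norm (K:=R_AbsRing)). intros eps.
    unfold Cis, is_series in H.
    pose proof (proj1 (filterlim_locally_ball_norm (K:=C_AbsRing) _ _) H eps) as E.
    revert E; apply filter_imp. intros n Hn. unfold ball_norm in *. rewrite <- sum_n_fst.
    eapply Rle_lt_trans; [|exact Hn].
    change (norm (minus (fst (sum_n u n)) (fst l))) with (Rabs (fst (sum_n u n) - fst l)).
    change (norm (minus (sum_n u n) l)) with (Cmod (Cminus (sum_n u n) l)).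
    pose proof (re_le_Cmod (Cminus (sum_n u n) l)) as R. unfold Re in R. simpl in R. exact R. }
  assert (H2 : is_series (fun k => snd (u k)) (snd l)).
  { unfold is_series. apply (filterlim_locally_ball_norm (K:=R_AbsRing)). intros eps.
    unfold Cis, is_series in H.
    pose proof (proj1 (filterlim_locally_ball_norm (K:=C_AbsRing) _ _) H eps) as E.
    revert E; apply filter_imp. intros n Hn. unfold ball_norm in *. rewrite <- sum_n_snd.
    eapply Rle_lt_trans; [|exact Hn].
    change (norm (minus (snd (sum_n u n)) (snd l))) with (Rabs (snd (sum_n u n) - snd l)).
    change (norm (minus (sum_n u n) l)) with (Cmod (Cminus (sum_n u n) l)).
    pose proof (Rmax_Cmod (Cminus (sum_n u n) l)) as R. simpl in R.
    eapply Rle_trans; [apply Rmax_r|exact R]. }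
  rewrite (is_series_unique _ _ H1), (is_series_unique _ _ H2). destruct l; reflexivity.
Qed.

Lemma Cmod_sum_n_le (u : nat -> C) (b : nat -> R) n :
  (forall k, Cmod (u k) <= b k) -> Cmod (sum_n u n) <= sum_n b n.
Proof.
  intros Hb. induction n as [|n IH].
  - rewrite !sum_O. apply Hb.
  - rewrite !sum_Sn. eapply Rle_trans; [apply Cmod_triangle|].
    change (plus (sum_n b n) (b (S n))) with (sum_n b n + b (S n)).
    apply Rplus_le_compat; auto.
Qed.

Lemma Cmod_rev (a b : C) : Rabs (Cmod a - Cmod b) <= Cmod (Cminus a b).
Proof.
    pose proof (Cmod_triangle (Cminus a b) b) as T1.
    pose proof (Cmod_triangle (Cminus b a) a) as T2.
    replace (Cplus (Cminus a b) b) with a in T1 by ring.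
    replace (Cplus (Cminus b a) a) with b in T2 by ring.
    replace (Cminus b a) with (Copp (Cminus a b)) in T2 by ring.
    rewrite Cmod_opp in T2. apply Rabs_le. lra.
Qed.

Lemma Cis_bound u l b lb :
  Cis u l -> (forall k, Cmod (u k) <= b k) -> is_series b lb -> Cmod l <= lb.
Proof.
  intros Hu Hb Hl.
  assert (L1 : is_lim_seq (fun n => Cmod (sum_n u n)) (Cmod l)).
  { change (filterlim (fun n => Cmod (sum_n u n)) eventually (locally (Cmod l))).
    apply (proj2 (filterlim_locally_ball_norm (K:=R_AbsRing) (U:=R_NormedModule) _ _)). intros eps.
    pose proof (proj1 (filterlim_locally_ball_norm (K:=C_AbsRing) _ _) Hu eps) as E.
    revert E; apply filter_imp. intros n Hn. unfold ball_norm in *.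
    change (norm (minus (Cmod (sum_n u n)) (Cmod l))) with (Rabs (Cmod (sum_n u n) - Cmod l)).
    change (norm (minus (sum_n u n) l)) with (Cmod (Cminus (sum_n u n) l)) in Hn.
    eapply Rle_lt_trans; [|exact Hn]. apply Cmod_rev. }
  assert (L2 : is_lim_seq (sum_n b) lb) by exact Hl.
  pose proof (is_lim_seq_le _ _ _ _ (fun n => Cmod_sum_n_le u b n Hb) L1 L2) as H.
  simpl in H. exact H.
Qed.

Lemma Cex_le u b : (forall k, Cmod (u k) <= b k) -> ex_series b -> exists l, Cis u l.
Proof.
  intros Hb Hs.
  destruct (@ex_series_le C_AbsRing C_CompleteNormedModule u b) as [l Hl].
  - intros n. apply Hb.
  - exact Hs.
  - exists l. exact Hl.
Qed.

Lemma Cgeom u M q : 0 <= q < 1 -> (forall k, Cmod (u k) <= M * q ^ k) ->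
  exists l, Cis u l /\ Cmod l <= M / (1 - q).
Proof.
  intros Hq Hb.
  assert (G : is_series (fun k => M * q ^ k) (M * / (1 - q))).
  { apply (is_series_scal_l (K:=R_AbsRing) M (fun k => q ^ k)).
    apply is_series_geom. rewrite Rabs_pos_eq; lra. }
  destruct (Cex_le u _ Hb) as [l Hl]. { exists (M * / (1 - q)); exact G. }
  exists l. split; auto. eapply Cis_bound; [exact Hl|exact Hb|exact G].
Qed.

Lemma Cis_bounded_terms u l : Cis u l -> exists M, forall k, Cmod (u k) <= M.
Proof.
  intros H.
  destruct (@filterlim_bounded C_AbsRing C_NormedModule (sum_n u)) as [M HM].
  { exists l. exact H. }
  exists (2 * M). intros [|k].
  - pose proof (HM 0%nat) as H0. rewrite sum_O in H0. change (Cmod (u 0%nat) <= M) in H0.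
    pose proof (Cmod_ge_0 (u 0%nat)). lra.
  - assert (E : u (S k) = Cminus (sum_n u (S k)) (sum_n u k)).
    { rewrite sum_Sn. change (plus (sum_n u k) (u (S k))) with (Cplus (sum_n u k) (u (S k))).
      ring. }
    rewrite E. unfold Cminus. eapply Rle_trans; [apply Cmod_triangle|].
    rewrite Cmod_opp. pose proof (HM (S k)) as A1. pose proof (HM k) as A2.
    change (Cmod (sum_n u (S k)) <= M) in A1. change (Cmod (sum_n u k) <= M) in A2. lra.
Qed.

Lemma Cis_ext u v l : (forall k, u k = v k) -> Cis u l -> Cis v l.
Proof. intros H. apply is_series_ext. exact H. Qed.

Lemma Cis_plus u v a b : Cis u a -> Cis v b -> Cis (fun k => Cplus (u k) (v k)) (Cplus a b).
Proof. intros H1 H2. exact (is_series_plus _ _ _ _ H1 H2). Qed.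

Lemma Cis_minus u v a b : Cis u a -> Cis v b -> Cis (fun k => Cminus (u k) (v k)) (Cminus a b).
Proof. intros H1 H2. exact (is_series_minus _ _ _ _ H1 H2). Qed.

Lemma Cis_scal c u a : Cis u a -> Cis (fun k => Cmult c (u k)) (Cmult c a).
Proof. intros H. exact (@is_series_scal_l C_AbsRing C_NormedModule c _ _ H). Qed.

Lemma CSeries_ext u v : (forall k, u k = v k) -> CSeries u = CSeries v.
Proof. intros H. replace v with u; auto. apply functional_extensionality; auto. Qed.

Lemma Cex_Cis u : @ex_series C_AbsRing C_NormedModule u -> Cis u (CSeries u).
Proof. intros [l Hl]. rewrite (Cis_CSeries _ _ Hl). exact Hl. Qed.
Ltac Cring := match goal with |- ?a = ?b => change (@eq C a b) end;
  repeat match goal with |- context [@pow_n C_Ring ?z ?k] =>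
    let t := fresh "t" in set (t := @pow_n C_Ring z k); clearbody t; change C in t end;
  ring.
Lemma div_lt_1 a b : 0 < b -> a < b -> a / b < 1.
Proof. intros H1 H2. apply (Rmult_lt_reg_r b); auto. unfold Rdiv. rewrite Rmult_assoc, Rinv_l; lra. Qed.

Lemma div_ge_0 a b : 0 < b -> 0 <= a -> 0 <= a / b.
Proof. intros. unfold Rdiv. apply Rmult_le_pos; auto. left. apply Rinv_0_lt_compat; auto. Qed.

Lemma pow_n_S (z : C) k : pow_n z (S k) = Cmult z (pow_n z k).
Proof. reflexivity. Qed.
Lemma pow_n_O (z : C) : pow_n z 0 = RtoC 1.
Proof. reflexivity. Qed.

Lemma Cmod_pow_n (z : C) k : Cmod (pow_n z k) = Cmod z ^ k.
Proof.
  induction k as [|k IH].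
  - rewrite pow_n_O. simpl. apply Cmod_1.
  - rewrite pow_n_S, Cmod_mult, IH. simpl. ring.
Qed.

Lemma pow_n_Cmult (a b : C) k : pow_n (Cmult a b) k = Cmult (pow_n a k) (pow_n b k).
Proof.
  induction k as [|k IH].
  - rewrite !pow_n_O. Cring.
  - rewrite !pow_n_S, IH. Cring.
Qed.

Lemma pow_n_one k : pow_n (RtoC 1) k = RtoC 1.
Proof.
  induction k as [|k IH]. reflexivity. rewrite pow_n_S, IH. Cring.
Qed.

Lemma RtoC_mult (r s : R) : RtoC (r * s) = Cmult (RtoC r) (RtoC s).
Proof. unfold RtoC, Cmult. simpl. f_equal; ring. Qed.

Lemma pow_n_RtoC (r : R) k : pow_n (RtoC r) k = RtoC (r ^ k).
Proof.
  induction k as [|k IH]. reflexivity. rewrite pow_n_S, IH. simpl. rewrite RtoC_mult. reflexivity.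
Qed.

Lemma pow_n_add (z : C) a b : pow_n z (a + b) = Cmult (pow_n z a) (pow_n z b).
Proof.
  induction a as [|a IH].
  - rewrite Nat.add_0_l, pow_n_O. Cring.
  - rewrite Nat.add_succ_l, !pow_n_S, IH. Cring.
Qed.

Lemma pow_n_mul (z : C) a j : pow_n (pow_n z a) j = pow_n z (a * j).
Proof.
  induction j as [|j IH].
  - rewrite Nat.mul_0_r. reflexivity.
  - rewrite pow_n_S, IH. replace (a * S j)%nat with (a + a * j)%nat by lia.
    rewrite pow_n_add. reflexivity.
Qed.

Lemma Cmod_RtoC_pos (r : R) : 0 <= r -> Cmod (RtoC r) = r.
Proof. intros H. rewrite Cmod_R. apply Rabs_pos_eq. exact H. Qed.

Lemma coef_bound_at (a : coef) (z : C) :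
  @ex_series C_AbsRing C_NormedModule (fun k => Cmult (a k) (pow_n z k)) ->
  exists M, forall k, Cmod (a k) * Cmod z ^ k <= M.
Proof.
  intros H. destruct (Cis_bounded_terms _ _ (Cex_Cis _ H)) as [M HM].
  exists M. intros k. rewrite <- Cmod_pow_n, <- Cmod_mult. apply HM.
Qed.

Lemma coef_bound_A (a : coef) s : inA a -> 0 <= s < 1 ->
  exists M, forall k, Cmod (a k) * s ^ k <= M.
Proof.
  intros Ha Hs. destruct (coef_bound_at a (RtoC s)) as [M HM].
  - apply Ha. rewrite Cmod_RtoC_pos; lra.
  - exists M. intros k. rewrite <- (Cmod_RtoC_pos s) by lra. apply HM.
Qed.

Lemma coef_bound_pos (a : coef) t M : (forall k, Cmod (a k) * t ^ k <= M) -> 0 <= M.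
Proof. intros H. pose proof (H 0%nat). simpl in H0. pose proof (Cmod_ge_0 (a 0%nat)). nra. Qed.

Lemma term_geom (a : coef) t M rho (w : C) k :
  (forall k, Cmod (a k) * t ^ k <= M) -> 0 < t -> Cmod w <= rho -> 
  Cmod (Cmult (a k) (pow_n w k)) <= M * (rho / t) ^ k.
Proof.
  intros H Ht Hw. rewrite Cmod_mult, Cmod_pow_n.
  assert (E : Cmod (a k) * rho ^ k = (Cmod (a k) * t ^ k) * (rho / t) ^ k).
  { assert (E1 : rho ^ k = t ^ k * (rho / t) ^ k).
    { rewrite <- Rpow_mult_distr. f_equal. field. lra. }
    rewrite E1. ring. }
  apply Rle_trans with (Cmod (a k) * rho ^ k).
  - apply Rmult_le_compat_l. apply Cmod_ge_0. apply pow_incr. split; [apply Cmod_ge_0|exact Hw].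
  - rewrite E. apply Rmult_le_compat_r. apply pow_le. 
    assert (0 <= rho) by (pose proof (Cmod_ge_0 w); lra).
    apply div_ge_0; lra. apply H.
Qed.

Lemma PSbound (a : coef) t M rho (w : C) :
  (forall k, Cmod (a k) * t ^ k <= M) -> 0 < t -> Cmod w <= rho -> rho < t ->
  Cis (fun k => Cmult (a k) (pow_n w k)) (evalA a w) /\ Cmod (evalA a w) <= M / (1 - rho / t).
Proof.
  intros H Ht Hw Hr.
  assert (0 <= rho) by (pose proof (Cmod_ge_0 w); lra).
  destruct (Cgeom (fun k => Cmult (a k) (pow_n w k)) M (rho / t)) as [l [Hl Hb]].
  - split. apply div_ge_0; lra. apply div_lt_1; lra.
  - intros k. apply term_geom; auto.
  - unfold evalA. rewrite (Cis_CSeries _ _ Hl). auto.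
Qed.
Ltac Cring2 :=
  repeat match goal with |- context [@plus ?G ?x ?y] => change (@plus G x y) with (Cplus x y) end;
  match goal with |- ?a = ?b => change (@eq C a b) end;
  repeat match goal with
    | |- context [@pow_n C_Ring ?z ?k] =>
      let t := fresh "t" in set (t := @pow_n C_Ring z k); clearbody t; change C in t
    | |- context [@sum_n ?G ?u ?k] =>
      let t := fresh "t" in set (t := @sum_n G u k); clearbody t; change C in t
    end;
  ring.

Definition cis (x : R) : C := (cos x, sin x).

Lemma pow_n_cis x m : pow_n (cis x) m = cis (INR m * x).
Proof.
  induction m as [|m IH].
  - simpl INR. rewrite Rmult_0_l. unfold cis. rewrite cos_0, sin_0. reflexivity.
  - rewrite pow_n_S, IH, S_INR. unfold cis, Cmult. cbn [fst snd].
    replace ((INR m + 1) * x) with (x + INR m * x) by ring.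
    rewrite cos_plus, sin_plus. f_equal; ring.
Qed.

Lemma Cmod_cis x : Cmod (cis x) = 1.
Proof.
  unfold Cmod, cis. cbn [fst snd]. rewrite <- sqrt_1. f_equal.
  pose proof (sin2_cos2 x) as H. unfold Rsqr in H. simpl. lra.
Qed.

Lemma cos_lt_1 x : 0 < x < 2 * PI -> cos x < 1.
Proof.
  intros H. replace x with (2 * (x / 2)) by field. rewrite cos_2a_sin.
  assert (0 < sin (x / 2)) by (apply sin_gt_0; lra). nra.
Qed.

Lemma cos_lt_1' x : 2 * PI < x < 4 * PI -> cos x < 1.
Proof.
  intros H. replace x with ((x - 2 * PI) + 2 * INR 1 * PI) by (simpl; ring).
  rewrite cos_period. apply cos_lt_1. lra.
Qed.

Lemma RtoC_plus (a b : R) : RtoC (a + b) = Cplus (RtoC a) (RtoC b).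
Proof. unfold RtoC, Cplus. cbn [fst snd]. f_equal; ring. Qed.

Lemma RtoC_inj (a b : R) : RtoC a = RtoC b -> a = b.
Proof. intros H. apply (f_equal fst) in H. exact H. Qed.

Lemma sum_n_Cmult_l (a : C) (u : nat -> C) n :
  sum_n (fun j => Cmult a (u j)) n = Cmult a (sum_n u n).
Proof.
  induction n as [|n IH].
  - rewrite !sum_O. reflexivity.
  - rewrite !sum_Sn, IH. Cring2.
Qed.

Lemma sum_n_ones n : sum_n (fun _ : nat => RtoC 1) n = RtoC (INR (S n)).
Proof.
  induction n as [|n IH].
  - rewrite sum_O. simpl. reflexivity.
  - rewrite sum_Sn, IH. rewrite (S_INR (S n)), RtoC_plus. reflexivity.
Qed.

Lemma geom_sum_C (a : C) n :
  Cmult (Cminus a (RtoC 1)) (sum_n (fun j => pow_n a j) n) = Cminus (pow_n a (S n)) (RtoC 1).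
Proof.
  induction n as [|n IH].
  - rewrite sum_O, pow_n_S, pow_n_O. Cring2.
  - rewrite sum_Sn. rewrite (pow_n_S a (S n)).
    change (plus (sum_n (fun j : nat => pow_n a j) n) (pow_n a (S n)))
      with (Cplus (sum_n (fun j : nat => pow_n a j) n) (pow_n a (S n))).
    rewrite Cmult_plus_distr_l, IH. rewrite (pow_n_S a n). Cring2.
Qed.

Lemma geom_sum_zero (a : C) n : a <> RtoC 1 -> pow_n a (S n) = RtoC 1 ->
  sum_n (fun j => pow_n a j) n = RtoC 0.
Proof.
  intros H1 H2. pose proof (geom_sum_C a n) as E. rewrite H2 in E.
  assert (Hne : Cminus a (RtoC 1) <> RtoC 0).
  { intros Hc. apply H1. replace a with (Cplus (Cminus a (RtoC 1)) (RtoC 1)) by Cring2.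
    rewrite Hc. Cring2. }
  set (s := sum_n (fun j => pow_n a j) n) in *. clearbody s. change C in s.
  replace s with (Cmult (Cinv (Cminus a (RtoC 1))) (Cmult (Cminus a (RtoC 1)) s)).
  - rewrite E. Cring2.
  - field. exact Hne.
Qed.

Lemma Cis_sum_n (u : nat -> nat -> C) (l : nat -> C) J :
  (forall j, Cis (u j) (l j)) -> Cis (fun n => sum_n (fun j => u j n) J) (sum_n l J).
Proof.
  intros H. induction J as [|J IH].
  - rewrite sum_O. eapply Cis_ext; [|apply (H 0%nat)]. intros n. rewrite sum_O. reflexivity.
  - rewrite sum_Sn. eapply Cis_ext; [|apply (Cis_plus _ _ _ _ IH (H (S J)))].
    intros n. simpl. rewrite sum_Sn. reflexivity.
Qed.

Lemma Cis_delta (x : C) k :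
  Cis (fun n => if Nat.eqb n k then x else RtoC 0) x.
Proof.
  assert (E : forall n, sum_n (fun n => if Nat.eqb n k then x else RtoC 0) n =
                        if Nat.ltb n k then RtoC 0 else x).
  { induction n as [|n IH].
    - rewrite sum_O. destruct k; reflexivity.
    - rewrite sum_Sn, IH.
      change (plus ?a ?b) with (Cplus a b).
      destruct (Nat.ltb_spec n k); destruct (Nat.eqb_spec (S n) k); destruct (Nat.ltb_spec (S n) k);
        try lia; Cring2. }
  unfold Cis, is_series.
  apply (filterlim_ext_loc (fun _ => x)).
  - exists k. intros n Hn. rewrite E. destruct (Nat.ltb_spec n k); [lia|reflexivity].
  - apply filterlim_const.
Qed.
Lemma Cmod_sum_const (u : nat -> C) a n : (forall j, Cmod (u j) <= a) ->
  Cmod (sum_n u n) <= INR (S n) * a.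
Proof.
  intros H. rewrite <- (sum_n_const n a). apply Cmod_sum_n_le. exact H.
Qed.

Lemma pow_le_one p m : 0 <= p <= 1 -> p ^ m <= 1.
Proof. intros H. induction m as [|m IH]; simpl. lra. nra. Qed.

Lemma pow_le_N p N n : 0 <= p <= 1 -> (N <= n)%nat -> p ^ n <= p ^ N.
Proof.
  intros H Hn. replace n with (N + (n - N))%nat by lia. rewrite pow_add.
  pose proof (pow_le_one p (n - N) H). pose proof (pow_le p N (proj1 H)). nra.
Qed.

Lemma dft_step (d : coef) r s eps M k N' :
  inA d -> 0 < r -> r < s -> s < 1 -> (forall n, Cmod (d n) * s ^ n <= M) ->
  (forall z, Cmod z <= r -> Cmod (evalA d z) <= eps) -> (k < S N')%nat ->
  Cmod (d k) * r ^ k <= eps + M * sqrt (r / s) ^ (S N') / (1 - sqrt (r / s)).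
Proof.
  intros Hd Hr Hrs Hs1 HM Heps Hk.
  set (N := S N') in *.
  assert (HN : 0 < INR N) by (apply lt_0_INR; unfold N; lia).
  set (om := cis (2 * PI / INR N)).
  assert (Hom1 : pow_n om N = RtoC 1).
  { unfold om. rewrite pow_n_cis. replace (INR N * (2 * PI / INR N)) with (2 * PI) by (field; lra).
    unfold cis. rewrite cos_2PI, sin_2PI. reflexivity. }
  assert (Homn : forall m, Cmod (pow_n om m) = 1).
  { intros m. unfold om. rewrite pow_n_cis. apply Cmod_cis. }
  set (c := fun n => Cmult (RtoC (/ INR N)) (sum_n (fun j => pow_n (pow_n om (n + N - k)) j) N')).
  set (S := Cmult (RtoC (/ INR N))
        (sum_n (fun j => Cmult (pow_n om (j * (N - k))) (evalA d (Cmult (RtoC r) (pow_n om j)))) N')).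
  assert (HS : Cis (fun n => Cmult (Cmult (d n) (pow_n (RtoC r) n)) (c n)) S).
  { assert (Hj : forall j, Cis (fun n => Cmult (pow_n om (j * (N - k)))
                                 (Cmult (d n) (pow_n (Cmult (RtoC r) (pow_n om j)) n)))
                       (Cmult (pow_n om (j * (N - k))) (evalA d (Cmult (RtoC r) (pow_n om j))))).
    { intros j. apply Cis_scal. apply Cex_Cis. apply Hd.
      rewrite Cmod_mult, Homn, Cmod_RtoC_pos; lra. }
    pose proof (Cis_scal (RtoC (/ INR N)) _ _ (Cis_sum_n _ _ N' Hj)) as H2.
    eapply Cis_ext; [|exact H2]. intros n. cbv beta. unfold c.
    rewrite (sum_n_ext _ (fun j => Cmult (Cmult (d n) (pow_n (RtoC r) n)) (pow_n (pow_n om (n + N - k)) j))).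
    - rewrite sum_n_Cmult_l. match goal with |- Cmult ?B (Cmult ?A ?X) = _ =>
        transitivity (Cmult A (Cmult B X)); [Cring2 | reflexivity] end.
    - intros j. rewrite pow_n_Cmult, !pow_n_mul.
      replace ((n + N - k) * j)%nat with (j * (N - k) + j * n)%nat by (unfold N in *; nia).
      rewrite pow_n_add. Cring2. }
  assert (HSb : Cmod S <= eps).
  { unfold S. rewrite Cmod_mult, Cmod_RtoC_pos by (left; apply Rinv_0_lt_compat; lra).
    apply Rle_trans with (/ INR N * (INR N * eps)).
    - apply Rmult_le_compat_l. left; apply Rinv_0_lt_compat; lra.
      apply Cmod_sum_const. intros j. rewrite Cmod_mult, Homn, Rmult_1_l.
      apply Heps. rewrite Cmod_mult, Homn, Cmod_RtoC_pos; lra.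
    - right. field. lra. }
  assert (Hck : c k = RtoC 1).
  { unfold c. replace (k + N - k)%nat with N by lia. rewrite Hom1.
    rewrite (sum_n_ext _ (fun _ => RtoC 1)) by (intros; apply pow_n_one).
    rewrite sum_n_ones. fold N. rewrite <- RtoC_mult. f_equal. field. lra. }
  assert (Hc0 : forall n, (n < N)%nat -> n <> k -> c n = RtoC 0).
  { intros n Hn Hnk. unfold c. rewrite geom_sum_zero. Cring2.
    - unfold om. rewrite pow_n_cis. intros Habs. apply (f_equal fst) in Habs.
      unfold cis in Habs. cbn [fst] in Habs.
      assert (Hlt : cos (INR (n + N - k) * (2 * PI / INR N)) < 1).
      { assert (Hm1 : (0 < n + N - k < 2 * N)%nat) by lia.
        assert (Hm2 : (n + N - k <> N)%nat) by lia.
        pose proof PI_RGT_0.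
        destruct (Nat.lt_ge_cases (n + N - k) N) as [Hl|Hl].
        - apply cos_lt_1. split.
          + apply Rmult_lt_0_compat. apply lt_0_INR. lia. apply Rdiv_lt_0_compat; lra.
          + apply lt_INR in Hl. replace (2 * PI) with (INR N * (2 * PI / INR N)) at 2 by (field; lra).
            apply Rmult_lt_compat_r. apply Rdiv_lt_0_compat; lra. exact Hl.
        - apply cos_lt_1'. assert (Hl' : (N < n + N - k)%nat) by lia.
          apply lt_INR in Hl'. destruct Hm1 as [_ Hm1]. apply lt_INR in Hm1.
          rewrite mult_INR in Hm1. simpl INR in Hm1 at 1.
          split.
          + replace (2 * PI) with (INR N * (2 * PI / INR N)) at 1 by (field; lra).
            apply Rmult_lt_compat_r. apply Rdiv_lt_0_compat; lra. exact Hl'.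
          + replace (4 * PI) with ((2 * INR N) * (2 * PI / INR N)) by (field; lra).
            apply Rmult_lt_compat_r. apply Rdiv_lt_0_compat; lra. exact Hm1. }
      unfold RtoC in Habs; cbn [fst] in Habs; lra.
    - rewrite pow_n_mul. rewrite Nat.mul_comm, <- pow_n_mul. fold N. rewrite Hom1. apply pow_n_one. }
  assert (Hc1 : forall n, Cmod (c n) <= 1).
  { intros n. unfold c. rewrite Cmod_mult, Cmod_RtoC_pos by (left; apply Rinv_0_lt_compat; lra).
    apply Rle_trans with (/ INR N * (INR N * 1)).
    - apply Rmult_le_compat_l. left; apply Rinv_0_lt_compat; lra.
      apply Cmod_sum_const. intros j. rewrite pow_n_mul, Homn. lra.
    - right. field. lra. }
  set (p := sqrt (r / s)).
  assert (Hq : 0 < r / s < 1) by (split; [apply Rdiv_lt_0_compat; lra | apply div_lt_1; lra]).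
  assert (Hp : 0 <= p < 1).
  { unfold p. split. apply sqrt_pos. rewrite <- sqrt_1. apply sqrt_lt_1; lra. }
  assert (Hpp : p * p = r / s) by (unfold p; apply sqrt_sqrt; lra).
  assert (HM0 : 0 <= M) by (eapply coef_bound_pos; exact HM).
  pose proof (Cis_minus _ _ _ _ HS (Cis_delta (Cmult (d k) (pow_n (RtoC r) k)) k)) as HW.
  destruct (Cgeom (fun n => Cminus (Cmult (Cmult (d n) (pow_n (RtoC r) n)) (c n))
                      (if Nat.eqb n k then Cmult (d k) (pow_n (RtoC r) k) else RtoC 0))
                  (M * p ^ N) p Hp) as [l [Hl Hlb]].
  { intros n. destruct (Nat.eqb_spec n k) as [->|Hnk].
    - rewrite Hck. replace (Cminus (Cmult (Cmult (d k) (pow_n (RtoC r) k)) (RtoC 1))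
                                  (Cmult (d k) (pow_n (RtoC r) k))) with (RtoC 0) by Cring2.
      rewrite Cmod_0. apply Rmult_le_pos. apply Rmult_le_pos; auto. apply pow_le; lra. apply pow_le; lra.
    - destruct (Nat.lt_ge_cases n N) as [HnN|HnN].
      + rewrite (Hc0 n HnN Hnk). replace (Cminus (Cmult (Cmult (d n) (pow_n (RtoC r) n)) (RtoC 0)) (RtoC 0))
          with (RtoC 0) by Cring2.
        rewrite Cmod_0. apply Rmult_le_pos. apply Rmult_le_pos; auto. apply pow_le; lra. apply pow_le; lra.
      + replace (Cminus (Cmult (Cmult (d n) (pow_n (RtoC r) n)) (c n)) (RtoC 0))
          with (Cmult (Cmult (d n) (pow_n (RtoC r) n)) (c n)) by Cring2.
        rewrite Cmod_mult. apply Rle_trans with (Cmod (Cmult (d n) (pow_n (RtoC r) n)) * 1).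
        * apply Rmult_le_compat_l. apply Cmod_ge_0. apply Hc1.
        * rewrite Rmult_1_r. eapply Rle_trans.
          { apply (term_geom d s M r (RtoC r) n HM). lra. rewrite Cmod_RtoC_pos; lra. }
          rewrite <- Hpp, Rpow_mult_distr.
          pose proof (pow_le_N p N n ltac:(lra) HnN). pose proof (pow_le p n (proj1 Hp)).
          pose proof (pow_le p N (proj1 Hp)).
          assert (M * (p ^ n * p ^ n) <= M * (p ^ N * p ^ n)).
          { apply Rmult_le_compat_l; auto. apply Rmult_le_compat_r; auto. }
          lra. }
  assert (El : l = Cminus S (Cmult (d k) (pow_n (RtoC r) k))).
  { rewrite <- (Cis_CSeries _ _ Hl). apply Cis_CSeries. exact HW. }
  rewrite El in Hlb.
  assert (E2 : Cmod (d k) * r ^ k = Cmod (Cmult (d k) (pow_n (RtoC r) k))).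
  { rewrite Cmod_mult, Cmod_pow_n, Cmod_RtoC_pos; lra. }
  rewrite E2.
  pose proof (Cmod_triangle S (Copp (Cminus S (Cmult (d k) (pow_n (RtoC r) k))))) as T.
  replace (Cplus S (Copp (Cminus S (Cmult (d k) (pow_n (RtoC r) k))))) with (Cmult (d k) (pow_n (RtoC r) k)) in T by Cring2.
  rewrite Cmod_opp in T. unfold Rdiv in *. lra.
Qed.
Lemma cauchy_est (d : coef) r eps : inA d -> 0 < r < 1 ->
  (forall z, Cmod z <= r -> Cmod (evalA d z) <= eps) ->
  forall k, Cmod (d k) * r ^ k <= eps.
Proof.
  intros Hd Hr Heps k.
  set (s := (1 + r) / 2).
  destruct (coef_bound_A d s Hd ltac:(unfold s; lra)) as [M HM].
  assert (HM0 : 0 <= M) by (eapply coef_bound_pos; exact HM).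
  set (p := sqrt (r / s)).
  assert (Hq : 0 < r / s < 1) by (split; [apply Rdiv_lt_0_compat; unfold s; lra | apply div_lt_1; unfold s; lra]).
  assert (Hp : 0 <= p < 1).
  { unfold p. split. apply sqrt_pos. rewrite <- sqrt_1. apply sqrt_lt_1; lra. }
  destruct (Rle_or_lt (Cmod (d k) * r ^ k) eps) as [H|H]; [exact H|exfalso].
  set (a := Cmod (d k) * r ^ k) in *.
  assert (Hy : 0 < (a - eps) * (1 - p) / (M + 1)).
  { apply Rdiv_lt_0_compat; [apply Rmult_lt_0_compat|]; lra. }
  destruct (pow_lt_1_zero p ltac:(rewrite Rabs_pos_eq; lra) _ Hy) as [N0 HN0].
  pose proof (dft_step d r s eps M k (N0 + k) Hd ltac:(lra) ltac:(unfold s; lra) ltac:(unfold s; lra)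
     HM Heps ltac:(lia)) as B.
  fold p in B. fold a in B.
  specialize (HN0 (S (N0 + k)) ltac:(lia)). rewrite Rabs_pos_eq in HN0 by (apply pow_le; lra).
  set (t := p ^ S (N0 + k)) in *.
  assert (Ht0 : 0 <= t) by (apply pow_le; lra).
  assert (B2 : M * t <= (M + 1) * t) by nra.
  assert (B3 : (M + 1) * t < (a - eps) * (1 - p)).
  { apply (Rmult_lt_compat_l (M + 1)) in HN0; [|lra].
    replace ((M + 1) * ((a - eps) * (1 - p) / (M + 1))) with ((a - eps) * (1 - p)) in HN0 by (field; lra).
    exact HN0. }
  assert (B4 : M * t / (1 - p) < a - eps).
  { apply (Rmult_lt_reg_r (1 - p)); [lra|]. unfold Rdiv. rewrite Rmult_assoc, Rinv_l by lra. lra. }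
  lra.
Qed.
Lemma inA_minus (f1 f2 : coef) : inA f1 -> inA f2 -> inA (fun k => Cminus (f1 k) (f2 k)).
Proof.
  intros H1 H2 z Hz. exists (Cminus (evalA f1 z) (evalA f2 z)).
  eapply Cis_ext; [|apply Cis_minus; apply Cex_Cis; [apply H1|apply H2]; exact Hz].
  intros k. simpl. Cring2.
Qed.

Lemma evalA_minus (f1 f2 : coef) z :
  @ex_series C_AbsRing C_NormedModule (fun k => Cmult (f1 k) (pow_n z k)) ->
  @ex_series C_AbsRing C_NormedModule (fun k => Cmult (f2 k) (pow_n z k)) ->
  evalA (fun k => Cminus (f1 k) (f2 k)) z = Cminus (evalA f1 z) (evalA f2 z).
Proof.
  intros H1 H2. unfold evalA at 1. apply Cis_CSeries.
  eapply Cis_ext; [|apply Cis_minus; apply Cex_Cis; [exact H1|exact H2]].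
  intros k. simpl. Cring2.
Qed.

Lemma had_bound (a g : coef) r R' A G :
  0 <= r -> 0 <= R' ->
  (forall k, Cmod (a k) * r ^ k <= A) -> (forall k, Cmod (g k) * R' ^ k <= G) ->
  forall k, Cmod (hadamard a g k) * (r * R') ^ k <= A * G.
Proof.
  intros Hr HR Ha Hg k. unfold hadamard. rewrite Cmod_mult, Rpow_mult_distr.
  replace (Cmod (a k) * Cmod (g k) * (r ^ k * R' ^ k)) with ((Cmod (a k) * r ^ k) * (Cmod (g k) * R' ^ k)) by ring.
  apply Rmult_le_compat; auto.
  - apply Rmult_le_pos. apply Cmod_ge_0. apply pow_le; auto.
  - apply Rmult_le_pos. apply Cmod_ge_0. apply pow_le; auto.
Qed.

Lemma pert (g f1 f2 : coef) R' G r eps rho (w : C) :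
  0 < R' -> (forall k, Cmod (g k) * R' ^ k <= G) -> 0 < r < 1 ->
  inA f1 -> inA f2 ->
  (forall z, Cmod z <= r -> Cmod (Cminus (evalA f1 z) (evalA f2 z)) <= eps) ->
  Cmod w <= rho -> rho < r * R' ->
  Cmod (Cminus (evalA (hadamard f1 g) w) (evalA (hadamard f2 g) w)) <= eps * G / (1 - rho / (r * R')).
Proof.
  intros HR HG Hr H1 H2 He Hw Hrho.
  set (d := fun k => Cminus (f1 k) (f2 k)).
  assert (Hd : inA d) by (apply inA_minus; auto).
  assert (Hde : forall z, Cmod z <= r -> Cmod (evalA d z) <= eps).
  { intros z Hz. unfold d. rewrite evalA_minus. apply He; auto.
    apply H1; lra. apply H2; lra. }
  pose proof (cauchy_est d r eps Hd Hr Hde) as Hc.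
  destruct (coef_bound_A f1 r H1 ltac:(lra)) as [M1 HM1].
  destruct (coef_bound_A f2 r H2 ltac:(lra)) as [M2 HM2].
  assert (Ht : 0 < r * R') by (apply Rmult_lt_0_compat; lra).
  destruct (PSbound (hadamard d g) (r * R') (eps * G) rho w
     (had_bound d g r R' eps G ltac:(lra) ltac:(lra) Hc HG) Ht Hw Hrho) as [Cd Bd].
  destruct (PSbound (hadamard f1 g) (r * R') (M1 * G) rho w
     (had_bound f1 g r R' M1 G ltac:(lra) ltac:(lra) HM1 HG) Ht Hw Hrho) as [C1 _].
  destruct (PSbound (hadamard f2 g) (r * R') (M2 * G) rho w
     (had_bound f2 g r R' M2 G ltac:(lra) ltac:(lra) HM2 HG) Ht Hw Hrho) as [C2 _].
  assert (E : evalA (hadamard d g) w = Cminus (evalA (hadamard f1 g) w) (evalA (hadamard f2 g) w)).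
  { rewrite <- (Cis_CSeries _ _ Cd). apply Cis_CSeries.
    eapply Cis_ext; [|exact (Cis_minus _ _ _ _ C1 C2)].
    intros k. unfold hadamard, d. simpl. Cring2. }
  rewrite <- E. exact Bd.
Qed.
Lemma pow_diff_bound (w1 w2 : C) rho k : 0 <= rho -> Cmod w1 <= rho -> Cmod w2 <= rho ->
  Cmod (Cminus (pow_n w1 (S k)) (pow_n w2 (S k))) <= INR (S k) * rho ^ k * Cmod (Cminus w1 w2).
Proof.
  intros Hr H1 H2. induction k as [|k IH].
  - rewrite !pow_n_S, !pow_n_O. replace (Cminus (Cmult w1 (RtoC 1)) (Cmult w2 (RtoC 1))) with (Cminus w1 w2) by Cring2.
    simpl. lra.
  - replace (Cminus (pow_n w1 (S (S k))) (pow_n w2 (S (S k)))) with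
      (Cplus (Cmult w1 (Cminus (pow_n w1 (S k)) (pow_n w2 (S k)))) (Cmult (Cminus w1 w2) (pow_n w2 (S k))))
      by (rewrite (pow_n_S w1 (S k)), (pow_n_S w2 (S k)); Cring2).
    eapply Rle_trans; [apply Cmod_triangle|]. rewrite !Cmod_mult, Cmod_pow_n.
    pose proof (Cmod_ge_0 (Cminus w1 w2)) as H0.
    pose proof (Cmod_ge_0 w1). pose proof (Cmod_ge_0 w2).
    pose proof (Cmod_ge_0 (Cminus (pow_n w1 (S k)) (pow_n w2 (S k)))).
    assert (A1 : Cmod w1 * Cmod (Cminus (pow_n w1 (S k)) (pow_n w2 (S k))) <= rho * (INR (S k) * rho ^ k * Cmod (Cminus w1 w2))).
    { apply Rmult_le_compat; auto. }
    assert (A2 : Cmod (Cminus w1 w2) * Cmod w2 ^ S k <= Cmod (Cminus w1 w2) * rho ^ S k).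
    { apply Rmult_le_compat_l; auto. apply pow_incr. split; auto. }
    rewrite (S_INR (S k)). simpl pow in *. nra.
Qed.

Lemma kpow_bound rho sigma k : 0 <= rho <= sigma ->
  (sigma - rho) * (INR (S k) * rho ^ k) <= sigma ^ (S k) - rho ^ (S k).
Proof.
  intros H. induction k as [|k IH].
  - simpl. lra.
  - rewrite S_INR. simpl pow in *. 
    pose proof (pow_le rho k (proj1 H)). pose proof (pos_INR (S k)).
    assert (A : sigma * ((sigma - rho) * (INR (S k) * rho ^ k)) <= sigma * (sigma * sigma ^ k - rho * rho ^ k)).
    { apply Rmult_le_compat_l; lra. }
    assert (B : rho * ((sigma - rho) * (INR (S k) * rho ^ k)) <= sigma * ((sigma - rho) * (INR (S k) * rho ^ k))).
    { apply Rmult_le_compat_r; [|lra]. apply Rmult_le_pos; [lra|]. apply Rmult_le_pos; auto. }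
    nra.
Qed.

Lemma coef_scale (a : coef) t M rho k : (forall k, Cmod (a k) * t ^ k <= M) -> 0 < t -> 0 <= rho ->
  Cmod (a k) * rho ^ k <= M * (rho / t) ^ k.
Proof.
  intros H Ht Hr. pose proof (term_geom a t M rho (RtoC rho) k H Ht) as T.
  assert (Hw : Cmod (RtoC rho) <= rho) by (rewrite Cmod_RtoC_pos; lra). specialize (T Hw).
  rewrite Cmod_mult, Cmod_pow_n, Cmod_RtoC_pos in T by lra. exact T.
Qed.

Lemma lipschitz (F : coef) t M rho : (forall k, Cmod (F k) * t ^ k <= M) -> 0 < rho < t ->
  forall w1 w2, Cmod w1 <= rho -> Cmod w2 <= rho ->
  Cmod (Cminus (evalA F w1) (evalA F w2)) <=
    (M / ((rho + t) / 2 - rho) / (1 - ((rho + t) / 2) / t)) * Cmod (Cminus w1 w2).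
Proof.
  intros HF Hr w1 w2 H1 H2.
  set (sigma := (rho + t) / 2).
  assert (HM0 : 0 <= M) by (eapply coef_bound_pos; exact HF).
  destruct (PSbound F t M rho w1 HF ltac:(lra) H1 ltac:(lra)) as [C1 _].
  destruct (PSbound F t M rho w2 HF ltac:(lra) H2 ltac:(lra)) as [C2 _].
  pose proof (Cmod_ge_0 (Cminus w1 w2)) as H0.
  assert (Hs : 0 < sigma - rho) by (unfold sigma; lra).
  assert (Hst : 0 <= sigma / t < 1) by (split; [apply div_ge_0; unfold sigma; lra|apply div_lt_1; unfold sigma; lra]).
  destruct (Cgeom (fun k => Cminus (Cmult (F k) (pow_n w1 k)) (Cmult (F k) (pow_n w2 k)))
              (M / (sigma - rho) * Cmod (Cminus w1 w2)) (sigma / t) Hst) as [l [Hl Hb]].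
  { intros [|k].
    - rewrite !pow_n_O. replace (Cminus (Cmult (F 0%nat) (RtoC 1)) (Cmult (F 0%nat) (RtoC 1))) with (RtoC 0) by Cring2.
      rewrite Cmod_0. simpl. rewrite Rmult_1_r. apply Rmult_le_pos; auto. apply div_ge_0; auto.
    - replace (Cminus (Cmult (F (S k)) (pow_n w1 (S k))) (Cmult (F (S k)) (pow_n w2 (S k))))
        with (Cmult (F (S k)) (Cminus (pow_n w1 (S k)) (pow_n w2 (S k)))) by Cring2.
      rewrite Cmod_mult.
      pose proof (pow_diff_bound w1 w2 rho k ltac:(lra) H1 H2) as P.
      pose proof (kpow_bound rho sigma k ltac:(unfold sigma; lra)) as K.
      pose proof (coef_scale F t M sigma (S k) HF ltac:(lra) ltac:(unfold sigma; lra)) as CS.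
      pose proof (Cmod_ge_0 (F (S k))) as HF0.
      pose proof (pow_le rho (S k) ltac:(lra)).
      assert (E1 : Cmod (F (S k)) * Cmod (Cminus (pow_n w1 (S k)) (pow_n w2 (S k)))
                   <= Cmod (F (S k)) * (INR (S k) * rho ^ k * Cmod (Cminus w1 w2))).
      { apply Rmult_le_compat_l; auto. }
      assert (E2 : INR (S k) * rho ^ k <= sigma ^ S k / (sigma - rho)).
      { apply (Rmult_le_reg_l (sigma - rho)); auto. unfold Rdiv.
        replace ((sigma - rho) * (sigma ^ S k * / (sigma - rho))) with (sigma ^ S k) by (field; lra).
        lra. }
      assert (E3 : Cmod (F (S k)) * (INR (S k) * rho ^ k * Cmod (Cminus w1 w2))
                   <= Cmod (F (S k)) * (sigma ^ S k / (sigma - rho) * Cmod (Cminus w1 w2))).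
      { apply Rmult_le_compat_l; auto. apply Rmult_le_compat_r; auto. }
      eapply Rle_trans; [exact E1|]. eapply Rle_trans; [exact E3|].
      replace (Cmod (F (S k)) * (sigma ^ S k / (sigma - rho) * Cmod (Cminus w1 w2)))
        with ((Cmod (F (S k)) * sigma ^ S k) * (Cmod (Cminus w1 w2) / (sigma - rho))) by (field; lra).
      replace (M / (sigma - rho) * Cmod (Cminus w1 w2) * (sigma / t) ^ S k)
        with ((M * (sigma / t) ^ S k) * (Cmod (Cminus w1 w2) / (sigma - rho))) by (field; lra).
      apply Rmult_le_compat_r; auto. apply div_ge_0; auto. }
  assert (El : l = Cminus (evalA F w1) (evalA F w2)).
  { rewrite <- (Cis_CSeries _ _ Hl). apply Cis_CSeries. exact (Cis_minus _ _ _ _ C1 C2). }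
  rewrite <- El. eapply Rle_trans; [exact Hb|]. fold sigma. right. field. split; unfold sigma in *; lra.
Qed.
Lemma Cmod_pair_le (a b : R) : Cmod (a, b) <= Rabs a + Rabs b.
Proof.
  unfold Cmod. cbn [fst snd].
  rewrite <- (sqrt_Rsqr (Rabs a + Rabs b)) by (pose proof (Rabs_pos a); pose proof (Rabs_pos b); lra).
  apply sqrt_le_1_alt. unfold Rsqr.
  pose proof (Rabs_pos a). pose proof (Rabs_pos b).
  assert (Ea : a ^ 2 = Rabs a * Rabs a) by (rewrite <- Rabs_mult, Rabs_pos_eq by nra; ring).
  assert (Eb : b ^ 2 = Rabs b * Rabs b) by (rewrite <- Rabs_mult, Rabs_pos_eq by nra; ring).
  rewrite Ea, Eb. nra.
Qed.

Lemma Cmod_sub_sym (a b : C) : Cmod (Cminus a b) = Cmod (Cminus b a).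
Proof. replace (Cminus a b) with (Copp (Cminus b a)) by Cring2. apply Cmod_opp. Qed.

Lemma Cmod_tri3 (a b c : C) : Cmod (Cminus a c) <= Cmod (Cminus a b) + Cmod (Cminus b c).
Proof. replace (Cminus a c) with (Cplus (Cminus a b) (Cminus b c)) by Cring2. apply Cmod_triangle. Qed.

Lemma Cmod_minus_ge (a b : C) : Cmod a - Cmod b <= Cmod (Cminus a b).
Proof. pose proof (Cmod_rev a b). pose proof (Rle_abs (Cmod a - Cmod b)). lra. Qed.

Lemma proj_disk (w : C) : exists x : C, Cmod x <= 1 /\ Cmod (Cminus w x) <= Rmax 0 (Cmod w - 1).
Proof.
  destruct (Rle_or_lt (Cmod w) 1) as [H|H].
  - exists w. split; auto. replace (Cminus w w) with (RtoC 0) by Cring2. rewrite Cmod_0. apply Rmax_l.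
  - exists (Cmult (RtoC (/ Cmod w)) w).
    assert (Hp : 0 < / Cmod w) by (apply Rinv_0_lt_compat; lra).
    split.
    + rewrite Cmod_mult, Cmod_RtoC_pos by lra. right. field. lra.
    + replace (Cminus w (Cmult (RtoC (/ Cmod w)) w)) with (Cmult (RtoC (1 - / Cmod w)) w).
      * rewrite Cmod_mult, Cmod_RtoC_pos. eapply Rle_trans; [|apply Rmax_r]. right. field. lra.
        assert (/ Cmod w < 1). { rewrite <- Rinv_1. apply Rinv_lt_contravar; lra. } lra.
      * unfold RtoC, Cmult, Cminus, Cplus, Copp. cbn [fst snd]. f_equal; ring.
Qed.

Lemma min_disk (F : C -> C) L rho : 0 < L -> 1 < rho ->
  (forall w1 w2, Cmod w1 <= rho -> Cmod w2 <= rho -> Cmod (Cminus (F w1) (F w2)) <= L * Cmod (Cminus w1 w2)) ->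
  (forall w, Cmod w <= 1 -> F w <> RtoC 0) ->
  exists m delta, 0 < m /\ 0 < delta /\ delta <= rho - 1 /\ forall w, Cmod w < 1 + delta -> m <= Cmod (F w).
Proof.
  intros HL Hrho HLip HF.
  set (D := fun u v : R => if Rle_dec (Cmod (u, v)) 1
                           then Rmin (Cmod (F (u, v)) / (4 * L)) ((rho - 1) / 4)
                           else (Cmod (u, v) - 1) / 2).
  assert (HD : forall u v, 0 < D u v).
  { intros u v. unfold D. destruct (Rle_dec (Cmod (u, v)) 1) as [H|H].
    - apply Rmin_glb_lt; [|lra]. apply Rdiv_lt_0_compat; [|lra].
      apply Cmod_gt_0. apply HF. exact H.
    - lra. }
  destruct (compactness_value_2d (-1) 1 (-1) 1 (fun u v => mkposreal (D u v) (HD u v))) as [d Hd].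
  exists (L * d), (Rmin (d / 2) ((rho - 1) / 2)).
  pose proof (cond_pos d) as Hd0.
  split; [apply Rmult_lt_0_compat; lra|].
  split; [apply Rmin_glb_lt; lra|].
  split; [eapply Rle_trans; [apply Rmin_r|lra]|].
  intros w Hw.
  destruct (proj_disk w) as [x [Hx Hwx]].
  assert (Hwx' : Cmod (Cminus w x) < Rmin (d / 2) ((rho - 1) / 2)).
  { eapply Rle_lt_trans; [exact Hwx|]. apply Rmax_lub_lt; [apply Rmin_glb_lt; lra|lra]. }
  destruct x as [x1 x2].
  pose proof (Rmax_Cmod (x1, x2)) as Hm. cbn [fst snd] in Hm.
  assert (Hx1 : -1 <= x1 <= 1).
  { pose proof (Rmax_l (Rabs x1) (Rabs x2)). pose proof (Rabs_maj2 x1). pose proof (Rle_abs x1). lra. }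
  assert (Hx2 : -1 <= x2 <= 1).
  { pose proof (Rmax_r (Rabs x1) (Rabs x2)). pose proof (Rabs_maj2 x2). pose proof (Rle_abs x2). lra. }
  apply Rnot_lt_le. intros Hlt.
  apply (Hd x1 x2 Hx1 Hx2). intros [u [v [Hu [Hv [H1 [H2 H3]]]]]].
  simpl in H1, H2, H3.
  assert (Hxt : Cmod (Cminus (x1, x2) (u, v)) < 2 * D u v).
  { eapply Rle_lt_trans; [apply Cmod_pair_le|]. 
    unfold Cminus, Cplus, Copp. cbn [fst snd]. 
    replace (x1 + - u) with (x1 - u) by ring. replace (x2 + - v) with (x2 - v) by ring. lra. }
  unfold D in *. destruct (Rle_dec (Cmod (u, v)) 1) as [Ht|Ht].
  - set (Ft := Cmod (F (u, v))) in *.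
    pose proof (Rmin_l (Ft / (4 * L)) ((rho - 1) / 4)) as M1.
    pose proof (Rmin_r (Ft / (4 * L)) ((rho - 1) / 4)) as M2.
    set (DD := Rmin (Ft / (4 * L)) ((rho - 1) / 4)) in *.
    pose proof (Rmin_l (d / 2) ((rho - 1) / 2)) as M3.
    pose proof (Rmin_r (d / 2) ((rho - 1) / 2)) as M4.
    set (dl := Rmin (d / 2) ((rho - 1) / 2)) in *.
    assert (Hwt : Cmod (Cminus w (u, v)) < dl + 2 * DD).
    { pose proof (Cmod_tri3 w (x1, x2) (u, v)). lra. }
    assert (Hwr : Cmod w <= rho) by lra.
    assert (Htr : Cmod (u, v) <= rho) by lra.
    pose proof (HLip w (u, v) Hwr Htr) as Lw.
    pose proof (Cmod_minus_ge (F (u, v)) (F w)) as T.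
    rewrite Cmod_sub_sym in T. fold Ft in T.
    assert (A1 : L * Cmod (Cminus w (u, v)) <= L * (dl + 2 * DD)) by (apply Rmult_le_compat_l; lra).
    assert (A2 : L * DD <= Ft / 4).
    { apply (Rmult_le_compat_l L) in M1; [|lra]. 
      replace (L * (Ft / (4 * L))) with (Ft / 4) in M1 by (field; lra). exact M1. }
    assert (A3 : L * d <= L * DD) by (apply Rmult_le_compat_l; lra).
    nra.
  - assert (Hc : Cmod (u, v) <= Cmod (Cminus (u, v) (x1, x2)) + Cmod (x1, x2)).
    { replace (u, v) with (Cplus (Cminus (u, v) (x1, x2)) (x1, x2)) at 1 by Cring2. apply Cmod_triangle. }
    rewrite Cmod_sub_sym in Hc. lra.
Qed.
Lemma key (f g : coef) R : inA f -> 1 < R ->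
  (forall z, Cmod z < R -> @ex_series C_AbsRing C_NormedModule (fun k => Cmult (g k) (pow_n z k))) ->
  (forall w, Cmod w <= 1 -> evalA (hadamard f g) w <> RtoC 0) ->
  exists r eps delta, 0 < r < 1 /\ 0 < eps /\ 0 < delta /\
    forall f', inA f' -> (forall z, Cmod z <= r -> Cmod (Cminus (evalA f' z) (evalA f z)) <= eps) ->
      forall w, Cmod w < 1 + delta -> evalA (hadamard f' g) w <> RtoC 0.
Proof.
  intros Hf HR Hg HF.
  set (R' := (1 + R) / 2).
  destruct (coef_bound_at g (RtoC R') (Hg (RtoC R') ltac:(rewrite Cmod_RtoC_pos; unfold R'; lra))) as [G0 HG0].
  rewrite Cmod_RtoC_pos in HG0 by (unfold R'; lra).
  assert (HG0p : 0 <= G0) by (eapply coef_bound_pos; exact HG0).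
  set (G := G0 + 1).
  assert (HG : forall k, Cmod (g k) * R' ^ k <= G) by (intros k; pose proof (HG0 k); unfold G; lra).
  set (r := (1 + R') / (2 * R')).
  assert (HR' : 1 < R') by (unfold R'; lra).
  assert (Hr : 0 < r < 1).
  { unfold r. split. apply Rdiv_lt_0_compat; lra. apply div_lt_1; lra. }
  set (t := r * R').
  assert (Ht : t = (1 + R') / 2) by (unfold t, r; field; lra).
  set (rho := (1 + t) / 2).
  assert (Hrho : 1 < rho < t) by (unfold rho; lra).
  destruct (coef_bound_A f r Hf ltac:(lra)) as [M1 HM1].
  assert (HM1p : 0 <= M1) by (eapply coef_bound_pos; exact HM1).
  pose proof (had_bound f g r R' M1 G ltac:(lra) ltac:(lra) HM1 HG) as HFb. fold t in HFb.
  set (L := M1 * G / ((rho + t) / 2 - rho) / (1 - ((rho + t) / 2) / t) + 1).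
  assert (HL0 : 0 <= M1 * G / ((rho + t) / 2 - rho) / (1 - ((rho + t) / 2) / t)).
  { apply div_ge_0. assert (((rho + t) / 2) / t < 1) by (apply div_lt_1; lra). lra.
    apply div_ge_0. lra. apply Rmult_le_pos; unfold G; lra. }
  destruct (min_disk (fun w => evalA (hadamard f g) w) L rho ltac:(unfold L; lra) ltac:(lra))
    as [m [delta [Hm [Hdelta [Hdr Hmin]]]]].
  { intros w1 w2 H1 H2.
    pose proof (lipschitz (hadamard f g) t (M1 * G) rho HFb ltac:(lra) w1 w2 H1 H2) as Lp.
    eapply Rle_trans; [exact Lp|]. apply Rmult_le_compat_r. apply Cmod_ge_0. unfold L. lra. }
  { exact HF. }
  assert (Hq : 0 < 1 - rho / t) by (assert (rho / t < 1) by (apply div_lt_1; lra); lra).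
  exists r, (m * (1 - rho / t) / (2 * G)), delta.
  split; [exact Hr|]. split.
  { apply Rdiv_lt_0_compat. apply Rmult_lt_0_compat; lra. unfold G; lra. }
  split; [exact Hdelta|].
  intros f' Hf' Hclose w Hw.
  assert (Hwr : Cmod w <= rho) by lra.
  pose proof (pert g f' f R' G r (m * (1 - rho / t) / (2 * G)) rho w ltac:(lra) HG Hr Hf' Hf Hclose Hwr
               ltac:(fold t; lra)) as P.
  fold t in P.
  replace (m * (1 - rho / t) / (2 * G) * G / (1 - rho / t)) with (m / 2) in P by (field; unfold G; lra).
  pose proof (Hmin w Hw) as Hmw. cbv beta in Hmw.
  intros Habs. rewrite Habs in P.
  replace (Cminus (RtoC 0) (evalA (hadamard f g) w)) with (Copp (evalA (hadamard f g) w)) in P by Cring2.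
  rewrite Cmod_opp in P. lra.
Qed.
Lemma list_min {A : Type} (l : list A) (h : A -> R) :
  exists m, 0 < m /\ forall i, In i l -> 0 < h i -> m <= h i.
Proof.
  induction l as [|a l IH].
  - exists 1. split; [lra|]. intros i [].
  - destruct IH as [m [Hm H]].
    destruct (Rlt_dec 0 (h a)) as [Ha|Ha].
    + exists (Rmin m (h a)). split; [apply Rmin_glb_lt; lra|].
      intros i [<-|Hi] Hp; [apply Rmin_r|]. eapply Rle_trans; [apply Rmin_l|]. auto.
    + exists m. split; auto. intros i [<-|Hi] Hp; [lra|]. auto.
Qed.

Definition Uset (g : coef) (V : coef -> Prop) (i : coef * (R * (R * R))) (f' : coef) : Prop :=
  let (f0, p) := i in let (r, q) := p in let (eps, delta) := q in
  inA f' /\ V f0 /\ 0 < r < 1 /\ 0 < eps /\ 0 < delta /\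
  (forall f'', inA f'' -> (forall z, Cmod z <= r -> Cmod (Cminus (evalA f'' z) (evalA f0 z)) <= eps) ->
      forall w, Cmod w < 1 + delta -> evalA (hadamard f'' g) w <> RtoC 0) /\
  exists eta, 0 < eta /\ forall z, Cmod z <= r -> Cmod (Cminus (evalA f' z) (evalA f0 z)) <= eps - eta.

Lemma Uset_open g V i : openA (Uset g V i).
Proof.
  destruct i as [f0 [r [eps delta]]]. intros f' Hf'.
  destruct Hf' as [HA [HV [Hr [He [Hd [Hk [eta [Heta Hz]]]]]]]].
  split; [exact HA|]. exists r, (eta / 2). split; [lra|]. split; [lra|].
  intros g' Hg' Hc. simpl. repeat (split; auto).
  exists (eta / 2). split; [lra|]. intros z Hz'.
  pose proof (Cmod_tri3 (evalA g' z) (evalA f' z) (evalA f0 z)).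
  pose proof (Hc z Hz'). pose proof (Hz z Hz'). lra.
Qed.

Lemma unif_delta (V : coef -> Prop) (g : coef) R :
  (forall f, V f -> inA f) -> compactA V -> 1 < R ->
  (forall z, Cmod z < R -> @ex_series C_AbsRing C_NormedModule (fun k => Cmult (g k) (pow_n z k))) ->
  (forall f, V f -> forall w, Cmod w <= 1 -> evalA (hadamard f g) w <> RtoC 0) ->
  exists delta, 0 < delta /\ forall f, V f -> forall w, Cmod w < 1 + delta -> evalA (hadamard f g) w <> RtoC 0.
Proof.
  intros HVA [_ Hc] HR Hg HF.
  destruct (Hc _ (Uset g V) (Uset_open g V)) as [l Hl].
  { intros f Hf. destruct (key f g R (HVA f Hf) HR Hg (HF f Hf)) as [r [eps [delta [Hr [He [Hd Hk]]]]]].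
    exists (f, (r, (eps, delta))). simpl. repeat (split; auto).
    exists eps. split; auto. intros z _. replace (Cminus (evalA f z) (evalA f z)) with (RtoC 0) by Cring2.
    rewrite Cmod_0. lra. }
  destruct (list_min l (fun i => snd (snd (snd i)))) as [m [Hm Hmin]].
  exists m. split; auto. intros f Hf w Hw.
  destruct (Hl f Hf) as [i [Hi HU]].
  pose proof (Hmin i Hi) as Hmi.
  destruct i as [f0 [r [eps delta]]]. simpl in Hmi.
  destruct HU as [HA [HV [Hr [He [Hd [Hk [eta [Heta Hz]]]]]]]].
  apply (Hk f HA).
  - intros z Hz'. pose proof (Hz z Hz'). lra.
  - specialize (Hmi Hd). lra.
Qed.
Lemma cont0 (f : coef) : inA f -> f 0%nat = RtoC 1 ->
  exists rho, 0 < rho < 1 /\ forall z, Cmod z <= rho -> Cmod (Cminus (evalA f z) (RtoC 1)) <= 1 / 4.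
Proof.
  intros Hf H0.
  destruct (coef_bound_A f (1 / 2) Hf ltac:(lra)) as [M HM].
  assert (HM0 : 0 <= M) by (eapply coef_bound_pos; exact HM).
  set (rho := / (16 * (M + 1))).
  assert (Hr : 0 < rho <= 1 / 16).
  { unfold rho. split. apply Rinv_0_lt_compat; lra.
    replace (1 / 16) with (/ 16) by field. apply Rinv_le_contravar; lra. }
  assert (HMr : M * rho <= 1 / 16).
  { unfold rho. apply (Rmult_le_reg_r (16 * (M + 1))); [lra|].
    rewrite Rmult_assoc, Rinv_l by lra. lra. }
  exists rho. split; [lra|]. intros z Hz.
  destruct (PSbound f (1 / 2) M rho z HM ltac:(lra) Hz ltac:(lra)) as [C1 _].
  assert (C2 : Cis (fun k => Cmult (f (S k)) (pow_n z (S k))) (Cminus (evalA f z) (RtoC 1))).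
  { apply (is_series_incr_1 (fun k => Cmult (f k) (pow_n z k))).
    change (plus ?a ?b) with (Cplus a b). rewrite H0, pow_n_O.
    replace (Cplus (Cminus (evalA f z) (RtoC 1)) (Cmult (RtoC 1) (RtoC 1))) with (evalA f z) by Cring2.
    exact C1. }
  destruct (Cgeom (fun k => Cmult (f (S k)) (pow_n z (S k))) (M * (2 * rho)) (2 * rho) ltac:(lra)) as [l [Hl Hb]].
  { intros k. rewrite Cmod_mult, Cmod_pow_n.
    eapply Rle_trans.
    { apply Rmult_le_compat_l. apply Cmod_ge_0. apply pow_incr. split; [apply Cmod_ge_0|exact Hz]. }
    eapply Rle_trans. apply (coef_scale f (1 / 2) M rho (S k) HM); lra.
    replace (rho / (1 / 2)) with (2 * rho) by field. simpl. right. ring. }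
  rewrite <- (Cis_CSeries _ _ C2), (Cis_CSeries _ _ Hl).
  eapply Rle_trans; [exact Hb|].
  apply (Rmult_le_reg_r (1 - 2 * rho)); [lra|]. unfold Rdiv. rewrite Rmult_assoc, Rinv_l by lra. nra.
Qed.

Definition U0set (i : R) (f' : coef) : Prop :=
  inA f' /\ 0 < i < 1 /\
  exists eta, 0 < eta /\ forall z, Cmod z <= i -> Cmod (Cminus (evalA f' z) (RtoC 1)) <= 1 / 2 - eta.

Lemma U0set_open i : openA (U0set i).
Proof.
  intros f' [HA [Hi [eta [Heta Hz]]]].
  split; [exact HA|]. exists i, (eta / 2). split; [lra|]. split; [lra|].
  intros g' Hg' Hc. split; auto. split; auto.
  exists (eta / 2). split; [lra|]. intros z Hz'.
  pose proof (Cmod_tri3 (evalA g' z) (evalA f' z) (RtoC 1)).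
  pose proof (Hc z Hz'). pose proof (Hz z Hz'). lra.
Qed.

Lemma small_radius (V : coef -> Prop) :
  (forall f, V f -> inA0 f) -> compactA V ->
  exists rho, 0 < rho < 1 /\ forall f, V f -> forall z, Cmod z <= rho -> evalA f z <> RtoC 0.
Proof.
  intros HV [_ Hc].
  destruct (Hc _ U0set U0set_open) as [l Hl].
  { intros f Hf. destruct (HV f Hf) as [HA H0].
    destruct (cont0 f HA H0) as [rho [Hr Hz]].
    exists rho. split; auto. split; auto. exists (1 / 4). split; [lra|].
    intros z Hz'. pose proof (Hz z Hz'). lra. }
  destruct (list_min l (fun i => i)) as [m [Hm Hmin]].
  exists (Rmin m (1 / 2)). split.
  { split. apply Rmin_glb_lt; lra. eapply Rle_lt_trans; [apply Rmin_r|lra]. }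
  intros f Hf z Hz Habs.
  destruct (Hl f Hf) as [i [Hi [HA [Hi01 [eta [Heta Hz']]]]]].
  pose proof (Hmin i Hi (proj1 Hi01)).
  pose proof (Rmin_l m (1 / 2)).
  specialize (Hz' z ltac:(lra)). rewrite Habs in Hz'.
  replace (Cminus (RtoC 0) (RtoC 1)) with (Copp (RtoC 1)) in Hz' by Cring2.
  rewrite Cmod_opp, Cmod_1 in Hz'. lra.
Qed.
Lemma Cis_single (u : nat -> C) : (forall k, u (S k) = RtoC 0) -> Cis u (u 0%nat).
Proof.
  intros H. eapply Cis_ext; [|apply (Cis_delta (u 0%nat) 0)].
  intros [|k]; simpl; auto.
Qed.

Lemma evalA_e (h : coef) z : evalA (hadamard h e_fun) z = h 0%nat.
Proof.
  unfold evalA. rewrite (Cis_CSeries _ (Cmult (Cmult (h 0%nat) (e_fun 0%nat)) (pow_n z 0))).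
  - rewrite pow_n_O. unfold e_fun. Cring2.
  - apply (Cis_single (fun k => Cmult (hadamard h e_fun k) (pow_n z k))).
    intros k. unfold hadamard, e_fun. Cring2.
Qed.

Lemma E_Px (x : C) (f g : coef) : evalA (hadamard (Px x f) g) (RtoC 1) = evalA (hadamard f g) x.
Proof.
  unfold evalA. apply CSeries_ext. intros k. unfold hadamard, Px. rewrite pow_n_one. Cring2.
Qed.

Lemma E_Px2 (x y : C) (f g : coef) :
  evalA (hadamard (Px y f) (Px x g)) (RtoC 1) = evalA (hadamard f g) (Cmult y x).
Proof.
  unfold evalA. apply CSeries_ext. intros k. unfold hadamard, Px. rewrite pow_n_one, pow_n_Cmult. Cring2.
Qed.

Lemma E_Pz (s : C) (f g : coef) z : evalA (hadamard f (Px s g)) z = evalA (hadamard f g) (Cmult s z).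
Proof.
  unfold evalA. apply CSeries_ext. intros k. unfold hadamard, Px. rewrite pow_n_Cmult. Cring2.
Qed.

Lemma ex_Px (s : C) (g : coef) z :
  @ex_series C_AbsRing C_NormedModule (fun k => Cmult (g k) (pow_n (Cmult s z) k)) ->
  @ex_series C_AbsRing C_NormedModule (fun k => Cmult (Px s g k) (pow_n z k)).
Proof.
  intros [l Hl]. exists l. eapply Cis_ext; [|exact Hl]. intros k. unfold Px. rewrite pow_n_Cmult. Cring2.
Qed.

Lemma RtoC_1_neq_0 : RtoC 1 <> RtoC 0.
Proof. intros H. apply RtoC_inj in H. lra. Qed.

Lemma eT (V : coef -> Prop) : (forall f, V f -> inA0 f) -> dual_T (cm V) e_fun.
Proof.
  intros HV. split.
  - split; [|reflexivity]. exists 2. split; [lra|]. intros z _.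
    exists (Cmult (e_fun 0%nat) (pow_n z 0)).
    apply (Cis_single (fun k => Cmult (e_fun k) (pow_n z k))). intros k. unfold e_fun. Cring2.
  - intros h [f [x [Hf [Hx ->]]]]. rewrite evalA_e. unfold Px. rewrite (proj2 (HV f Hf)), pow_n_O.
    replace (Cmult (RtoC 1) (RtoC 1)) with (RtoC 1) by Cring2. apply RtoC_1_neq_0.
Qed.

Lemma notE (V : coef -> Prop) : (forall f, V f -> inA0 f) -> compactA V ->
  ~ (forall h, dual_star V h <-> h = e_fun).
Proof.
  intros HV HC HW.
  destruct (small_radius V HV HC) as [rho [Hr Hsr]].
  set (gr := fun k => RtoC (rho ^ k)).
  assert (Hg : dual_star V gr).
  { split; [split|].
    - intros z Hz. destruct (Cgeom (fun k => Cmult (gr k) (pow_n z k)) 1 rho ltac:(lra)) as [l [Hl _]].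
      + intros k. unfold gr. rewrite Cmod_mult, Cmod_pow_n, Cmod_RtoC_pos by (apply pow_le; lra).
        rewrite Rmult_1_l. pose proof (pow_le rho k ltac:(lra)).
        assert (Cmod z ^ k <= 1) by (apply pow_le_one; split; [apply Cmod_ge_0|lra]). nra.
      + exists l; exact Hl.
    - reflexivity.
    - intros f Hf z Hz.
      replace (evalA (hadamard f gr) z) with (evalA f (Cmult (RtoC rho) z)).
      + apply Hsr; auto. rewrite Cmod_mult, Cmod_RtoC_pos by lra.
        pose proof (Cmod_ge_0 z). nra.
      + unfold evalA. apply CSeries_ext. intros k. unfold hadamard, gr.
        rewrite pow_n_Cmult, pow_n_RtoC. Cring2. }
  apply HW in Hg. apply (f_equal (fun h => h 1%nat)) in Hg. unfold gr, e_fun in Hg.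
  apply RtoC_inj in Hg. simpl in Hg. lra.
Qed.

Theorem theorem6 (V : coef -> Prop) :
  (forall f, V f -> inA0 f) ->
  compactA V ->
  forall g : coef,
    bor (dual_star V) g <-> (dual_star V g /\ ~ dual_T (cm V) g).
Proof.
  intros HV HC g. split.
  - intros [[HW _]|[_ [Hg Hbd]]].
    + exfalso. exact (notE V HV HC HW).
    + split; [exact Hg|]. intros [[[R [HR Hgs]] Hg0] HT].
      assert (HF : forall f, V f -> forall w, Cmod w <= 1 -> evalA (hadamard f g) w <> RtoC 0).
      { intros f Hf w Hw. rewrite <- E_Px. apply HT. exists f, w. auto. }
      destruct (unif_delta V g R (fun f Hf => proj1 (HV f Hf)) HC HR Hgs HF) as [delta [Hd Hdel]].
      set (s := 1 + Rmin delta (R - 1) / 2).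
      assert (Hs1 : 1 < s) by (unfold s; pose proof (Rmin_glb_lt delta (R - 1) 0 Hd ltac:(lra)); lra).
      assert (HsR : s < R) by (unfold s; pose proof (Rmin_r delta (R - 1)); lra).
      assert (Hsd : s < 1 + delta) by (unfold s; pose proof (Rmin_l delta (R - 1)); lra).
      set (h := Px (RtoC s) g).
      assert (Hh : dual_star V h).
      { split; [split|].
        - intros z Hz. apply ex_Px. apply Hgs. rewrite Cmod_mult, Cmod_RtoC_pos by lra.
          pose proof (Cmod_ge_0 z). nra.
        - unfold h, Px. rewrite Hg0, pow_n_O. Cring2.
        - intros f Hf z Hz. unfold h. rewrite E_Pz. apply Hdel; auto.
          rewrite Cmod_mult, Cmod_RtoC_pos by lra. pose proof (Cmod_ge_0 z). nra. }
      assert (Hinv : Cmod (RtoC (/ s)) = / s) by (apply Cmod_RtoC_pos; left; apply Rinv_0_lt_compat; lra).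
      assert (Hlt : / s < 1) by (rewrite <- Rinv_1; apply Rinv_lt_contravar; lra).
      assert (Heq : g = Px (RtoC (/ s)) h).
      { apply functional_extensionality. intros k. unfold h, Px.
        rewrite <- Cmult_assoc, <- pow_n_Cmult, <- RtoC_mult, Rinv_r by lra.
        rewrite pow_n_one. Cring2. }
      pose proof (Hbd h (RtoC (/ s)) Hh ltac:(lra) Heq). lra.
  - intros [Hg HnT].
    destruct (classic (forall h, dual_star V h <-> h = e_fun)) as [HW|HnW].
    + exfalso. apply HnT. assert (E : g = e_fun) by (apply HW; exact Hg). rewrite E. apply eT; auto.
    + right. split; [exact HnW|]. split; [exact Hg|].
      intros g' x Hg' Hx Heq.
      destruct (Rle_lt_dec 1 (Cmod x)) as [H1|H1]; [lra|exfalso].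
      apply HnT. pose proof (Cmod_ge_0 x) as Hx0.
      split; [split|].
      * exists (2 / (1 + Cmod x)). split.
        { apply (Rmult_lt_reg_r (1 + Cmod x)); [lra|]. unfold Rdiv. rewrite Rmult_assoc, Rinv_l by lra. lra. }
        intros z Hz. rewrite Heq. apply ex_Px. apply (proj1 (proj1 Hg')).
        rewrite Cmod_mult. pose proof (Cmod_ge_0 z).
        assert (Cmod x * Cmod z <= Cmod x * (2 / (1 + Cmod x))) by (apply Rmult_le_compat_l; lra).
        assert (Cmod x * (2 / (1 + Cmod x)) < 1).
        { apply (Rmult_lt_reg_r (1 + Cmod x)); [lra|]. unfold Rdiv.
          rewrite Rmult_assoc, (Rmult_assoc 2), Rinv_l by lra. lra. }
        lra.
      * rewrite Heq. unfold Px. rewrite (proj2 (proj1 Hg')), pow_n_O. Cring2.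
      * intros h [f [y [Hf [Hy ->]]]]. rewrite Heq, E_Px2. apply (proj2 Hg'); auto.
        rewrite Cmod_mult. pose proof (Cmod_ge_0 y). nra.
Qed.
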